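(* Let $\bar P=(P,P^* )\in\bar M$ and let $(x_n)$ be a sequence in $M$ such that $P=\lim I^-(x_n)$ and $P^*=\lim I^+(x_n)$. Then $\Phi(x_n)$ converges to $\bar P$ in $(\bar M,\bar{\mathcal T})$.
   Context: Let $M$ be a strongly causal spacetime (a time-oriented Lorentzian manifold in which every point has a neighbourhood that no non-spacelike curve enters more than once). $I^\pm(p)$ denotes the chronological future/past of $p\in M$, and $I^\pm(S)=\bigcup_{s\in S}I^\pm(s)$. A past-set is a set $I^-(S)$ with $S\subset M$ (the empty set included). An IP is a nonempty past-set that is not the union of two proper subsets which are past-sets. IFs are defined dually. For an IP $P$, $f(P)=I^+(\{x:P\subset I^-(x)\})$. For an IF $P^*$, $p(P^* )=I^-(\{x:P^*\subset I^+(x)\})$. $R_{pf}$ is the set of pairs $(P,Q^* )$ (with $P$ an IP and $Q^*$ an IF) such that both of the following hold: - $Q^*$ is a maximal IF (under inclusion) contained in $f(P)$; - $P$ is a maximal IP contained in $p(Q^* )$. $\bar M$ is the set of pairs $\bar P=(P,P^* )$ such that one of the following holds: - $(P,P^* )\in R_{pf}$; - $P=\emptyset$ and $P^*$ is an IF occurring in no pair of $R_{pf}$; - $P^*=\emptyset$ and $P$ is an IP occurring in no pair of $R_{pf}$. $\Phi(p)=(I^-(p),I^+(p))$ is an injection $M\to\bar M$. Limits of sets: for past-sets $P_n$ and $Q$, $Q=\lim P_n$ means both of the following: - (i) each $x\in Q$ lies in $P_n$ for all sufficiently large $n$; - (ii) for each $x\in M$ with $I^-(x)\not\subset Q$, one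 has $I^-(x)\not\subset P_n$ for all sufficiently large $n$. Limits of future-sets are defined dually, with $I^+$ in place of $I^-$. For $\bar S\subset\bar M$ define: - $L^+_{IF}(\bar S)=\{\bar Q:Q^*\ne\emptyset,\ Q^*\subset\bigcup_{\bar R\in\bar S}R^*\}$; - $L^-_{IP}(\bar S)=\{\bar Q:Q\neq\emptyset,\ Q\subset\bigcup_{\bar R\in\bar S}R\}$; - $Cl_{FB}(\bar S)=\bar S\cup\{\bar Q:Q^*=\emptyset,\ Q=\lim R_n\text{ for some sequence }\bar R_n\in\bar S\}$; - $Cl_{PB}(\bar S)=\bar S\cup\{\bar Q:Q=\emptyset,\ Q^*=\lim R^*_n\text{ for some sequence }\bar R_n\in\bar S\}$; - $L^+(\bar S)=Cl_{FB}[\bar S\cup L^+_{IF}(\bar S)]$; - $L^-(\bar S)=Cl_{PB}[\bar S\cup L^-_{IP}(\bar S)]$. $\bar{\mathcal T}$ is the coarsest topology on $\bar M$ in which $\bar M\setminus L^\pm(\bar S)$ are open for every $\bar S\subset\bar M$. *)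

(* Defs.v *)
From mathcomp Require Import all_boot.
From mathcomp Require Import boolp classical_sets.
Set Implicit Arguments. Unset Strict Implicit. Unset Printing Implicit Defensive.
Local Open Scope classical_set_scope.

(* The spacetime M is represented by its carrier and its chronological
   relation  chr x y  <->  x << y  (y lies in I^+(x)). *)
Section CBoundary.
Variables (M : Type) (chr : M -> M -> Prop).

Definition Ifut (p : M) : set M := [set y | chr p y].
Definition Ipast (p : M) : set M := [set y | chr y p].
Definition IfutS (S : set M) : set M := \bigcup_(s in S) Ifut s.
Definition IpastS (S : set M) : set M := \bigcup_(s in S) Ipast s.

Definition past_set (A : set M) : Prop := exists S, A = IpastS S.
Definition future_set (A : set M) : Prop := exists S, A = IfutS S.

Definition IP (P : set M) : Prop :=
  P !=set0 /\ past_set P /\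
  ~ (exists A B, past_set A /\ past_set B /\ A `<` P /\ B `<` P /\ P = A `|` B).
Definition IF (P : set M) : Prop :=
  P !=set0 /\ future_set P /\
  ~ (exists A B, future_set A /\ future_set B /\ A `<` P /\ B `<` P /\ P = A `|` B).

Definition fP (P : set M) : set M := IfutS [set x | P `<=` Ipast x].
Definition pF (F : set M) : set M := IpastS [set x | F `<=` Ifut x].

Definition maximal_IF_in (Q A : set M) : Prop :=
  IF Q /\ Q `<=` A /\ (forall Q', IF Q' -> Q' `<=` A -> Q `<=` Q' -> Q' = Q).
Definition maximal_IP_in (P A : set M) : Prop :=
  IP P /\ P `<=` A /\ (forall P', IP P' -> P' `<=` A -> P `<=` P' -> P' = P).

Definition Rpf (P Q : set M) : Prop :=
  IP P /\ IF Q /\ maximal_IF_in Q (fP P) /\ maximal_IP_in P (pF Q).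

Definition in_Mbar (PP : set M * set M) : Prop :=
  let: (P, Q) := PP in
  Rpf P Q
  \/ (P = set0 /\ IF Q /\ ~ (exists P', Rpf P' Q))
  \/ (Q = set0 /\ IP P /\ ~ (exists Q', Rpf P Q')).

Definition Mbar : set (set M * set M) := [set PP | in_Mbar PP].

Definition Phi (p : M) : set M * set M := (Ipast p, Ifut p).

Definition lim_past (Q : set M) (Pn : nat -> set M) : Prop :=
  (forall x, Q x -> exists N, forall n, (N <= n)%N -> Pn n x) /\
  (forall x, ~ (Ipast x `<=` Q) ->
     exists N, forall n, (N <= n)%N -> ~ (Ipast x `<=` Pn n)).
Definition lim_fut (Q : set M) (Pn : nat -> set M) : Prop :=
  (forall x, Q x -> exists N, forall n, (N <= n)%N -> Pn n x) /\
  (forall x, ~ (Ifut x `<=` Q) ->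
     exists N, forall n, (N <= n)%N -> ~ (Ifut x `<=` Pn n)).

Definition LIF (S : set (set M * set M)) : set (set M * set M) :=
  [set QQ | Mbar QQ /\ QQ.2 !=set0 /\ QQ.2 `<=` \bigcup_(RR in S) RR.2].
Definition LIP (S : set (set M * set M)) : set (set M * set M) :=
  [set QQ | Mbar QQ /\ QQ.1 !=set0 /\ QQ.1 `<=` \bigcup_(RR in S) RR.1].
Definition ClFB (S : set (set M * set M)) : set (set M * set M) :=
  S `|` [set QQ | Mbar QQ /\ QQ.2 = set0 /\
           exists RR : nat -> set M * set M,
             (forall n, S (RR n)) /\ lim_past QQ.1 (fun n => (RR n).1)].
Definition ClPB (S : set (set M * set M)) : set (set M * set M) :=
  S `|` [set QQ | Mbar QQ /\ QQ.1 = set0 /\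
           exists RR : nat -> set M * set M,
             (forall n, S (RR n)) /\ lim_fut QQ.2 (fun n => (RR n).2)].
Definition Lplus (S : set (set M * set M)) := ClFB (S `|` LIF S).
Definition Lminus (S : set (set M * set M)) := ClPB (S `|` LIP S).

(* The topology \bar T on \bar M: the coarsest topology in which every
   \bar M \ L^{+-}(S), S ⊂ \bar M, is open, i.e. the topology generated by
   these sets as a subbasis (open sets = subsets of \bar M). *)
Inductive Topen : set (set M * set M) -> Prop :=
  | Topen_Lplus S : S `<=` Mbar -> Topen (Mbar `\` Lplus S)
  | Topen_Lminus S : S `<=` Mbar -> Topen (Mbar `\` Lminus S)
  | Topen_full : Topen Mbar
  | Topen_inter U V : Topen U -> Topen V -> Topen (U `&` V)
  | Topen_union (I : Type) (F : I -> set (set M * set M)) :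
      (forall i, Topen (F i)) -> Topen (\bigcup_(i in [set: I]) F i).

Definition Tconverges (u : nat -> set M * set M) (l : set M * set M) : Prop :=
  forall U, Topen U -> U l -> exists N, forall n, (N <= n)%N -> U (u n).

End CBoundary.

Definition strongly_causal_chronology (M : Type) (chr : M -> M -> Prop) : Prop :=
  (forall x y z, chr x y -> chr y z -> chr x z) /\
  (forall x, ~ chr x x) /\
  (forall x z, chr x z -> exists y, chr x y /\ chr y z) /\
  (forall x, exists y, chr x y) /\ (forall x, exists y, chr y x) /\
  (forall x y, Ipast chr x = Ipast chr y -> x = y) /\
  (forall x y, Ifut chr x = Ifut chr y -> x = y) /\
  (forall p, in_Mbar chr (Phi chr p)).

(* Main.v *)
Require Import Defs.
From mathcomp Require Import all_boot.
From mathcomp Require Import boolp classical_sets.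
From Stdlib Require Import Classical.
Set Implicit Arguments.
Local Open Scope classical_set_scope.

Section Aux.
Variables (M : Type) (chr : M -> M -> Prop).
Hypothesis hfut : forall y, exists z, chr y z.
Hypothesis hpast : forall y, exists z, chr z y.

Lemma plus_fact S y : Lplus chr S (Phi chr y) -> (S `|` LIF chr S) (Phi chr y).
Proof.
case=> [H|[_ [H2 _]]]; first exact H.
exfalso; have [z hz] := hfut y.
have : Ifut chr y z by [].
by rewrite /= in H2; rewrite H2.
Qed.

Lemma minus_fact S y : Lminus chr S (Phi chr y) -> (S `|` LIP chr S) (Phi chr y).
Proof.
case=> [H|[_ [H2 _]]]; first exact H.
exfalso; have [z hz] := hpast y.
have : Ipast chr y z by [].
by rewrite /= in H2; rewrite H2.
Qed.

Lemma U_plus S y : (S `|` LIF chr S) (Phi chr y) ->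
  Ifut chr y `<=` \bigcup_(RR in S) RR.2.
Proof.
case=> [H|[_ [_ h]]]; last exact h.
by move=> z hz; exists (Phi chr y).
Qed.

Lemma U_minus S y : (S `|` LIP chr S) (Phi chr y) ->
  Ipast chr y `<=` \bigcup_(RR in S) RR.1.
Proof.
case=> [H|[_ [_ h]]]; last exact h.
by move=> z hz; exists (Phi chr y).
Qed.

Variables (P Pst : set M) (hMb : Mbar chr (P, Pst)) (x : nat -> M).
Hypothesis hlimP : lim_past chr P (fun n => Ipast chr (x n)).
Hypothesis hlimF : lim_fut chr Pst (fun n => Ifut chr (x n)).

Lemma subseq_fact (L : set (set M * set M)) :
  (forall N, exists n, (N <= n)%N /\ L (Phi chr (x n))) ->
  exists g : nat -> nat, (forall k, (k <= g k)%N) /\ (forall k, L (Phi chr (x (g k)))).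
Proof.
move=> H.
exists (fun N => proj1_sig (cid (H N))).
split=> k; by case: (cid (H k)) => /= n [].
Qed.

Lemma key_plus S : ~ Lplus chr S (P, Pst) ->
  exists N, forall n, (N <= n)%N -> ~ Lplus chr S (Phi chr (x n)).
Proof.
move=> Hn; apply: NNPP => Hc; apply: Hn.
have H : forall N, exists n, (N <= n)%N /\ Lplus chr S (Phi chr (x n)).
  move=> N; apply: NNPP => H'; apply: Hc; exists N => n hn hL; apply: H'.
  by exists n.
case: (classic (exists y, Pst y)) => [Hne|Hno].
- left; right; split; first exact hMb.
  split; first exact Hne.
  move=> y hy /=; have [N hN] := hlimF.1 y hy.
  have [n [hn hL]] := H N.
  exact: (U_plus (plus_fact hL) (hN n hn)).
- have E : Pst = set0.
    by apply/seteqP; split => y hy //=; apply: Hno; exists y.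
  right; split; first exact hMb.
  split; first exact E.
  have [g [hg hgL]] := subseq_fact _ H.
  exists (fun k => Phi chr (x (g k))); split.
    by move=> k; apply: plus_fact.
  split.
  + move=> y hy; have [N hN] := hlimP.1 y hy.
    by exists N => k hk; apply: hN; apply: leq_trans hk (hg k).
  + move=> y hy; have [N hN] := hlimP.2 y hy.
    by exists N => k hk; apply: hN; apply: leq_trans hk (hg k).
Qed.

Lemma key_minus S : ~ Lminus chr S (P, Pst) ->
  exists N, forall n, (N <= n)%N -> ~ Lminus chr S (Phi chr (x n)).
Proof.
move=> Hn; apply: NNPP => Hc; apply: Hn.
have H : forall N, exists n, (N <= n)%N /\ Lminus chr S (Phi chr (x n)).
  move=> N; apply: NNPP => H'; apply: Hc; exists N => n hn hL; apply: H'.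
  by exists n.
case: (classic (exists y, P y)) => [Hne|Hno].
- left; right; split; first exact hMb.
  split; first exact Hne.
  move=> y hy /=; have [N hN] := hlimP.1 y hy.
  have [n [hn hL]] := H N.
  exact: (U_minus (minus_fact hL) (hN n hn)).
- have E : P = set0.
    by apply/seteqP; split => y hy //=; apply: Hno; exists y.
  right; split; first exact hMb.
  split; first exact E.
  have [g [hg hgL]] := subseq_fact _ H.
  exists (fun k => Phi chr (x (g k))); split.
    by move=> k; apply: minus_fact.
  split.
  + move=> y hy; have [N hN] := hlimF.1 y hy.
    by exists N => k hk; apply: hN; apply: leq_trans hk (hg k).
  + move=> y hy; have [N hN] := hlimF.2 y hy.
    by exists N => k hk; apply: hN; apply: leq_trans hk (hg k).
Qed.

End Aux.

Theorem theorem8 (M : Type) (chr : M -> M -> Prop)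
  (hM : strongly_causal_chronology chr)
  (P Pst : set M) (hP : in_Mbar chr (P, Pst)) (x : nat -> M)
  (hlimP : lim_past chr P (fun n => Ipast chr (x n)))
  (hlimF : lim_fut chr Pst (fun n => Ifut chr (x n))) :
  Tconverges chr (fun n => Phi chr (x n)) (P, Pst).
Proof.
case: hM => _ [_ [_ [hf [hp [_ [_ hPhi]]]]]].
move=> U HU; elim: HU.
- move=> S _ [hMb hnL].
  have [N hN] := key_plus hf hMb x hlimP hlimF hnL.
  by exists N => n hn; split; [exact: hPhi | exact: hN].
- move=> S _ [hMb hnL].
  have [N hN] := key_minus hp hMb x hlimP hlimF hnL.
  by exists N => n hn; split; [exact: hPhi | exact: hN].
- by move=> _; exists 0%N => n _; exact: hPhi.
- move=> U1 V1 _ IH1 _ IH2 [h1 h2].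
  have [N1 hN1] := IH1 h1; have [N2 hN2] := IH2 h2.
  exists (maxn N1 N2) => n hn; split.
    by apply: hN1; apply: leq_trans hn; apply: leq_maxl.
  by apply: hN2; apply: leq_trans hn; apply: leq_maxr.
- move=> I F _ IH [i _ hi].
  have [N hN] := IH i hi.
  by exists N => n hn; exists i => //; apply: hN.
Qed.
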